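(* Let $n\ge 1$. The maximum number of nonzero entries of an $n\times n\times n$ ASHM equals $m_n=\frac{n(n^2+2)}{3}$, and this maximum is attained by the diamond ASHM $\mathfrak D_n=[F_n^1,F_n^2,\ldots,F_n^n]$. Moreover, for each $k\in\{1,\ldots,n\}$: (i) if $A$ is an $n\times n$ ASM for which there exist $n\times n$ ASMs $A_1,\ldots,A_{k-1},A_{k+1},\ldots,A_n$ such that $[A_1,\ldots,A_{k-1},A,A_{k+1},\ldots,A_n]$ is an ASHM, then $A$ has at most as many nonzero entries as $F_n^k$; (ii) more precisely, for each such $A$ and each $i\in\{1,\ldots,n\}$, the number of nonzeros in row $i$ (resp. column $i$) of $A$ is at most the number of nonzeros in row $i$ (resp. column $i$) of $F_n^k$.
   Context: An $n\times n$ alternating sign matrix (ASM) is an $n\times n$ matrix with entries in $\{0,1,-1\}$ such that in every row and every column the nonzero entries alternate in sign, beginning and ending with $+1$. An $n\times n\times n$ hypermatrix $A=[a_{ijk}]$ is written $A=[A_1,\ldots,A_n]$ with $A_k=[a_{ijk}]_{i,j}$ its $k$-th horizontal plane. $A$ is an alternating sign hypermatrix (ASHM) if all entries lie in $\{0,\pm1\}$ and in every line (row line: fixed $j,k$; column line: fixed $i,k$; vertical line: fixed $i,j$) the nonzeros alternate in sign beginning and ending with $+1$; equivalently every plane obtained by fixing one index is an ASM. For $1\le k\le n$, $F_n^k=[f_{ij}]$ is the $n\times n$ matrix with $f_{ij}=(-1)^{i+j+k+1}$ if $k+1\le i+j\le 2n+1-k$ and $|i-j|\le k-1$, and $f_{ij}=0$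 otherwise (so $F_n^1=I_n$ and $F_n^n$ is the anti-diagonal permutation matrix; each $F_n^k$ is an ASM). The diamond ASHM is $\mathfrak D_n=[F_n^1,F_n^2,\ldots,F_n^n]$, which is an ASHM. *)

(* Defs.v *)
From HB Require Import structures.
From mathcomp Require Import all_boot all_order all_algebra.
Set Implicit Arguments. Unset Strict Implicit. Unset Printing Implicit Defensive.
Import Order.TTheory GRing.Theory Num.Theory.
Local Open Scope ring_scope.

Fixpoint alt_pm (s : seq int) : bool :=
  match s with
  | [::] => false
  | [:: x] => x == 1
  | x :: y :: t => [&& x == 1, y == -1 & alt_pm t]
  end.

Definition asm_line n (f : 'I_n -> int) : bool :=
  [forall x, (f x == 0) || (f x == 1) || (f x == -1)] &&
  alt_pm [seq f x | x <- enum 'I_n & f x != 0].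

Definition is_asm n (A : 'M[int]_n) : bool :=
  [forall i, asm_line (fun j => A i j)] && [forall j, asm_line (fun i => A i j)].

(* An n x n x n hypermatrix A = [A_1, ..., A_n] is given by its horizontal
   planes: H k = A_k, so that a_{ijk} = H k i j. *)
Definition hypermx n := 'I_n -> 'M[int]_n.

Definition is_ashm n (H : hypermx n) : bool :=
  [&& [forall j, forall k, asm_line (fun i => H k i j)],
      [forall i, forall k, asm_line (fun j => H k i j)]
    & [forall i, forall j, asm_line (fun k => H k i j)]].

Definition nnz3 n (H : hypermx n) : nat :=
  #|[set t : 'I_n * 'I_n * 'I_n | H t.2 t.1.1 t.1.2 != 0]|.
Definition nnz n (A : 'M[int]_n) : nat := #|[set t : 'I_n * 'I_n | A t.1 t.2 != 0]|.
Definition nnz_row n (A : 'M[int]_n) (i : 'I_n) : nat := #|[set j | A i j != 0]|.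
Definition nnz_col n (A : 'M[int]_n) (j : 'I_n) : nat := #|[set i | A i j != 0]|.

(* F_n^k, with k 1-based (1 <= k <= n); matrix indices are 0-based,
   so the paper's (i,j) corresponds to our (i.+1, j.+1). *)
Definition Fmx n (k : nat) : 'M[int]_n :=
  \matrix_(i < n, j < n)
    let a := i.+1 in let b := j.+1 in
    if [&& (k.+1 <= a + b)%N, (a + b <= 2 * n + 1 - k)%N,
           (a - b <= k - 1)%N & (b - a <= k - 1)%N]
    then (-1) ^+ (a + b + k + 1) else 0.

Definition diamond n : hypermx n := fun k => Fmx n (k.+1).
Arguments diamond n : clear implicits.

(* Main.v *)
Require Import Defs.
From HB Require Import structures.
From mathcomp Require Import all_boot all_order all_algebra.
From mathcomp Require Import zify ring lra.
Set Implicit Arguments. Unset Strict Implicit. Unset Printing Implicit Defensive.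
Import Order.TTheory GRing.Theory Num.Theory.

Local Open Scope ring_scope.

Lemma alt_pm_ind (P : seq int -> Prop) :
  (forall x, x == 1 -> P [:: x]) ->
  (forall t, alt_pm t -> P t -> P [:: 1, -1 & t]) ->
  forall w, alt_pm w -> P w.
Proof.
move=> H1 H2 w; suff: forall m w, (size w <= m)%N -> alt_pm w -> P w.
  by move=> /(_ _ w (leqnn _)).
elim=> [|m IH] {}w; first by case: w.
case: w => [|x [|y t]] //= Hs; first by move/H1.
case/and3P=> /eqP -> /eqP -> Ht; apply: H2 => //; apply: IH => //.
by move: Hs => /=; lia.
Qed.

Lemma alt_sum w : alt_pm w -> \sum_(x <- w) x = 1.
Proof.
elim/alt_pm_ind => [x /eqP ->|t _ IH]; first by rewrite big_seq1.
by rewrite !big_cons IH; lra.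
Qed.

Lemma alt_prefix w : alt_pm w -> forall u v, w = u ++ v ->
  0 <= \sum_(x <- u) x <= 1.
Proof.
elim/alt_pm_ind => [x /eqP -> |t _ IH] u v.
  case: u => [|y [|z u']] /=; rewrite ?big_nil ?big_seq1 //.
  by case=> <-.
case: u => [|y [|z u']] /=; rewrite ?big_nil ?big_seq1 //.
  by case=> <-.
case=> <- <- /IH; rewrite !big_cons.
by move=> /andP[h1 h2]; apply/andP; split; lra.
Qed.

Lemma alt_count w : alt_pm w -> ((size w).+1 = 2 * count (pred1 (1 : int)) w)%N.
Proof.
elim/alt_pm_ind => [x /eqP -> |t _ IH] //=.
by rewrite IH add0n mulnDr.
Qed.

Lemma cardc (n : nat) (P : pred 'I_n) : #|[set x | P x]| = count P (enum 'I_n).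
Proof.
rewrite cardsE -sum1_card -big_enum sum1_count count_predT {1}/enum_mem size_filter -enumT.
by [].
Qed.

Lemma sum_nz (I : Type) (r : seq I) (g : I -> int) :
  \sum_(i <- r | g i != 0) g i = \sum_(i <- r) g i.
Proof. rewrite big_mkcond; apply: eq_bigr => i _; by case: eqP. Qed.

Section Line.
Variables (n : nat) (g : 'I_n -> int).
Hypothesis Hg : asm_line g.

Let w := [seq g x | x <- enum 'I_n & g x != 0].
Lemma walt : alt_pm w.
Proof. by case/andP: Hg. Qed.

Lemma line_prefix m : 0 <= \sum_(i <- take m (enum 'I_n)) g i <= 1.
Proof.
have := alt_prefix walt.
rewrite /w -{1}(cat_take_drop m (enum 'I_n)) filter_cat map_cat.
move=> /(_ _ _ erefl).
by rewrite big_map big_filter sum_nz.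
Qed.

Lemma line_sum : \sum_i g i = 1.
Proof.
have := alt_sum walt; rewrite /w big_map big_filter sum_nz.
by rewrite big_enum.
Qed.

Lemma line_count :
  (#|[set x | g x != 0]|.+1 = 2 * #|[set x | g x == 1]|)%N.
Proof.
rewrite !cardc.
have -> : count (fun x => g x != 0) (enum 'I_n) = size w.
  by rewrite size_map size_filter.
have -> : count (fun x => g x == 1) (enum 'I_n) = count (pred1 (1:int)) w.
  rewrite /w [RHS]count_map count_filter; apply: eq_count => x /=.
  by case: (g x =P 1) => // ->.
exact: alt_count walt.
Qed.

End Line.

Section Mat.
Variables (n : nat) (M : 'I_n -> 'I_n -> int).
Hypothesis Hr : forall i, asm_line (fun j => M i j).
Hypothesis Hc : forall j, asm_line (fun i => M i j).

Lemma count_bound (r : seq 'I_n) p :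
  (forall j, 0 <= \sum_(i <- r) M i j <= 1) ->
  (forall j, M p j = 1 -> \sum_(i <- r) M i j = 1) ->
  (#|[set j | M p j == 1]| <= size r)%N.
Proof.
move=> H1 H2; set S := fun j => \sum_(i <- r) M i j.
apply: (@leq_trans #|[set j | S j == 1]|).
  apply: subset_leq_card; apply/subsetP => j; rewrite !inE => /eqP/H2 h.
  by rewrite /S h.
suff -> : #|[set j | S j == 1]| = size r by [].
have E1 : \sum_j S j = (\sum_j (S j == 1 : nat))%:R.
  rewrite natr_sum; apply: eq_bigr => j _.
  have := H1 j; rewrite -/(S j); case: eqP => [->//|]; lia.
have E2 : \sum_j S j = (size r)%:R.
  rewrite /S exchange_big /=.
  rewrite (eq_bigr (fun _ => 1%:R)); last by move=> i _; exact: line_sum.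
  by rewrite -natr_sum sum1_size.
have : ((\sum_j (S j == 1 : nat))%:R = (size r)%:R :> int) by rewrite -E1.
move/eqP; rewrite eqr_nat => /eqP <-.
by rewrite cardc -sum1_count big_mkcond /= big_enum.
Qed.

Lemma sum_split j m :
  \sum_(i <- drop m (enum 'I_n)) M i j = 1 - \sum_(i <- take m (enum 'I_n)) M i j.
Proof.
have := line_sum (Hc j); rewrite -big_enum -{1}(cat_take_drop m (enum 'I_n)) big_cat /=.
move=> <-; lra.
Qed.

Lemma nth_e (p : 'I_n) : nth p (enum 'I_n) p = p.
Proof. by apply: val_inj; rewrite /= nth_enum_ord. Qed.

Lemma line_bound (p : 'I_n) :
  (#|[set j | M p j != 0]| <= 2 * minn p.+1 (n - p) - 1)%N.
Proof.
have hc := line_count (Hr p).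
have hp := ltn_ord p.
have top : (#|[set j | M p j == 1]| <= p.+1)%N.
  have -> : p.+1 = size (take p.+1 (enum 'I_n)).
    by rewrite size_takel ?size_enum_ord.
  apply: count_bound => j; first exact: (line_prefix (Hc j) p.+1).
  rewrite (take_nth p) ?size_enum_ord // big_rcons /= nth_e => h.
  have := line_prefix (Hc j) p; have := line_prefix (Hc j) p.+1.
  rewrite (take_nth p) ?size_enum_ord // big_rcons /= nth_e h.
  set s := \sum_(i <- take p (enum _)) M i j; lia.
have bot : (#|[set j | M p j == 1]| <= n - p)%N.
  have -> : (n - p = size (drop p (enum 'I_n)))%N.
    by rewrite size_drop size_enum_ord.
  apply: count_bound => j.
    rewrite sum_split; have := line_prefix (Hc j) p; lia.
  move=> h; rewrite (drop_nth p) ?size_enum_ord // big_cons nth_e h sum_split.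
  have := line_prefix (Hc j) p.+1; have := line_prefix (Hc j) p.
  rewrite (take_nth p) ?size_enum_ord // big_rcons /= nth_e h.
  set s := \sum_(i <- take p (enum _)) M i j; lia.
lia.
Qed.

End Mat.

Lemma sgn_mod (e1 e2 : nat) : (e1 %% 2 = e2 %% 2)%N -> (-1) ^+ e1 = (-1) ^+ e2 :> int.
Proof. by move=> H; rewrite -signr_odd -[RHS]signr_odd -!modn2 H. Qed.

Lemma sgn_neq0 (e : nat) : (-1) ^+ e != 0 :> int.
Proof. by rewrite -signr_odd; case: odd. Qed.

Lemma alt_iota (c m lo : nat) : ((lo + c) %% 2 = 0)%N ->
  alt_pm [seq (-1) ^+ (x + c) | x <- iota lo (2 * m + 1)].
Proof.
elim: m lo => [|m IH] lo H.
  by rewrite /= (@sgn_mod _ 0) //.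
have -> : (2 * m.+1 + 1 = (2 * m + 1).+2)%N by lia.
rewrite /= (@sgn_mod (lo + c) 0) ?H // (@sgn_mod (lo.+1 + c) 1); last by lia.
rewrite !eqxx /=. apply: IH; lia.
Qed.

Lemma filter_iota_int (lo hi n : nat) : (lo <= hi < n)%N ->
  [seq x <- iota 0 n | (lo <= x <= hi)%N] = iota lo (hi.+1 - lo).
Proof.
move=> H.
have -> : iota 0 n = iota 0 lo ++ iota lo (hi.+1 - lo) ++ iota hi.+1 (n - hi.+1).
  have e : n = (lo + (hi.+1 - lo) + (n - hi.+1))%N by lia.
  rewrite {1}e !iotaD add0n -catA; congr (_ ++ (_ ++ iota _ _)); lia.
rewrite !filter_cat.
rewrite (@eq_in_filter _ _ pred0); last by move=> x; rewrite mem_iota /=; lia.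
rewrite filter_pred0.
rewrite (@eq_in_filter _ _ pred0 (iota hi.+1 _)); last by move=> x; rewrite mem_iota /=; lia.
rewrite filter_pred0 cats0 /=.
rewrite (@eq_in_filter _ _ predT); last by move=> x; rewrite mem_iota /=; lia.
by rewrite filter_predT.
Qed.

Lemma card_int (n lo hi : nat) : (hi < n)%N ->
  #|[set x : 'I_n | (lo <= x <= hi)%N]| = (hi.+1 - lo)%N.
Proof.
move=> H; rewrite cardc.
rewrite -(count_map val (fun x => lo <= x <= hi)%N) val_enum_ord.
case: (leqP lo hi) => Hl.
  by rewrite -size_filter filter_iota_int ?size_iota ?Hl.
rewrite (@eq_in_count _ _ pred0) ?count_pred0; last by move=> x _ /=; lia.
lia.
Qed.

Lemma interval_line n (f : 'I_n -> int) (lo hi c : nat) :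
  (lo <= hi < n)%N -> ((lo + c) %% 2 = 0)%N -> ((hi + c) %% 2 = 0)%N ->
  (forall x : 'I_n, f x = if (lo <= x <= hi)%N then (-1) ^+ (x + c) else 0) ->
  asm_line f.
Proof.
move=> H1 H2 H3 Hf; apply/andP; split.
  apply/forallP => x; rewrite Hf; case: ifP => _; rewrite ?eqxx ?orbT //.
  by rewrite -signr_odd; case: odd; rewrite ?eqxx ?orbT.
have -> : [seq f x | x <- enum 'I_n & f x != 0] =
   [seq (-1) ^+ (x + c) | x <- map val [seq x : 'I_n <- enum 'I_n | (lo <= x <= hi)%N]].
  rewrite -map_comp (@eq_filter _ _ (fun x : 'I_n => (lo <= x <= hi)%N)); last first.
    by move=> x; rewrite Hf; case: ifP => _; rewrite ?sgn_neq0 ?eqxx.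
  apply/eq_in_map => x; rewrite mem_filter => /andP[hx _] /=.
  by rewrite Hf hx.
rewrite -(filter_map val (fun x => lo <= x <= hi)%N) val_enum_ord filter_iota_int //.
have -> : (hi.+1 - lo = 2 * ((hi - lo) %/ 2) + 1)%N by lia.
exact: alt_iota.
Qed.

Lemma FmxE n (k i j : 'I_n) : Fmx n k.+1 i j =
  if [&& k <= i + j, i + j + k + 2 <= 2 * n, i <= j + k & j <= i + k]%N
  then (-1) ^+ (i + j + k) else 0.
Proof.
rewrite mxE /=.
have -> : [&& k.+2 <= i.+1 + j.+1, i.+1 + j.+1 <= 2 * n + 1 - k.+1,
           i.+1 - j.+1 <= k.+1 - 1 & j.+1 - i.+1 <= k.+1 - 1]%N =
          [&& k <= i + j, i + j + k + 2 <= 2 * n, i <= j + k & j <= i + k]%N.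
  by apply/idP/idP => /and4P[? ? ? ?]; apply/and4P; split; lia.
case: ifP => // _; apply: sgn_mod; lia.
Qed.

Lemma cond_if (b1 b2 : bool) (x y : int) : b1 = b2 -> (b2 -> x = y) ->
  (if b1 then x else 0) = (if b2 then y else 0).
Proof. by move=> -> h; case: b2 h => // ->. Qed.

Ltac beq := apply/idP/idP;
  [move=> /and4P[? ? ? ?]; apply/andP; split; lia
  | move=> /andP[? ?]; apply/and4P; split; lia].

Lemma diamond_ashm n : is_ashm (diamond n).
Proof.
apply/and3P; split.
- apply/forallP => j; apply/forallP => k.
  have hj := ltn_ord j; have hk := ltn_ord k.
  apply: (@interval_line _ _ (maxn (k - j) (j - k)) (minn (2 * n - 2 - k - j) (j + k)) (j + k)); try lia.
  move=> i; rewrite /diamond FmxE; apply: cond_if; first by beq.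
  move=> _; apply: sgn_mod; lia.
- apply/forallP => i; apply/forallP => k.
  have hi := ltn_ord i; have hk := ltn_ord k.
  apply: (@interval_line _ _ (maxn (k - i) (i - k)) (minn (2 * n - 2 - k - i) (i + k)) (i + k)); try lia.
  move=> j; rewrite /diamond FmxE; apply: cond_if; first by beq.
  move=> _; apply: sgn_mod; lia.
- apply/forallP => i; apply/forallP => j.
  have hi := ltn_ord i; have hj := ltn_ord j.
  apply: (@interval_line _ _ (maxn (i - j) (j - i)) (minn (i + j) (2 * n - 2 - i - j)) (i + j)); try lia.
  move=> k; rewrite /diamond FmxE; apply: cond_if; first by beq.
  move=> _; apply: sgn_mod; lia.
Qed.

Definition gg n p := (2 * minn p.+1 (n - p) - 1)%N.
Definition S n := (\sum_(0 <= k < n) \sum_(0 <= i < n) minn (gg n i) (gg n k))%N.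

Lemma const1 m (F : nat -> nat) : (forall i, (i < m)%N -> F i = 1%N) ->
  (\sum_(0 <= i < m) F i)%N = m.
Proof.
move=> h; rewrite (eq_big_nat _ _ (F2 := fun _ => 1%N)); last by move=> i /andP[_ /h].
by rewrite sum_nat_const_nat subn0 muln1.
Qed.

Lemma ends (F : nat -> nat) m :
  (\sum_(0 <= k < m.+2) F k = F 0 + \sum_(0 <= k < m) F k.+1 + F m.+1)%N.
Proof. by rewrite big_nat_recl // big_nat_recr // addnA. Qed.

Lemma inner n k : (k < n)%N ->
  (\sum_(0 <= i < n.+2) minn (gg n.+2 i) (gg n.+2 k.+1) =
   2 + (2 * n + \sum_(0 <= i < n) minn (gg n i) (gg n k)))%N.
Proof.
move=> hk; rewrite ends.
rewrite (eq_big_nat _ _ (F2 := fun i => minn (gg n i) (gg n k) + 2))%N; last first.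
  by move=> i /andP[_ hi]; rewrite /gg; lia.
rewrite big_split /= sum_nat_const_nat.
have -> : minn (gg n.+2 0) (gg n.+2 k.+1) = 1%N by rewrite /gg; lia.
have -> : minn (gg n.+2 n.+1) (gg n.+2 k.+1) = 1%N by rewrite /gg; lia.
lia.
Qed.

Lemma edge n k : k = 0%N \/ k = n.+1 ->
  (\sum_(0 <= i < n.+2) minn (gg n.+2 i) (gg n.+2 k))%N = n.+2.
Proof.
move=> hk; apply: const1 => i hi; rewrite /gg; case: hk => ->; lia.
Qed.

Lemma S_rec n : S n.+2 = (S n + 2 * n ^ 2 + 4 * n + 4)%N.
Proof.
rewrite /S ends edge ?edge; [|by right|by left].
rewrite (eq_big_nat _ _ (F2 := fun k => 2 + (2 * n + \sum_(0<=i<n) minn (gg n i) (gg n k))))%N; last first.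
  by move=> k /andP[_ hk]; rewrite inner.
rewrite big_split /= sum_nat_const_nat big_split /= sum_nat_const_nat.
lia.
Qed.

Lemma S_closed n : (3 * S n = n * (n ^ 2 + 2))%N.
Proof.
suff: (3 * S n = n * (n ^ 2 + 2))%N /\ (3 * S n.+1 = n.+1 * (n.+1 ^ 2 + 2))%N by case.
elim: n => [|n [IH0 IH]].
  by rewrite /S big_geq // big_nat1 big_nat1.
split=> //; rewrite S_rec; nia.
Qed.

Lemma Frow n (k i : 'I_n) : nnz_row (Fmx n k.+1) i = minn (gg n i) (gg n k).
Proof.
have hi := ltn_ord i; have hk := ltn_ord k.
rewrite /nnz_row.
have -> : [set j | Fmx n k.+1 i j != 0] = [set j : 'I_n |
    maxn (k - i) (i - k) <= j <= minn (2 * n - 2 - k - i) (i + k)]%N.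
  apply/setP => j; rewrite !inE FmxE; case: ifP => h.
    rewrite sgn_neq0; apply/esym; move/and4P: h => [? ? ? ?]; apply/andP; split; lia.
  rewrite eqxx; apply/esym/negbTE; apply: contraFN h => /andP[? ?].
  apply/and4P; split; lia.
rewrite card_int; rewrite /gg; lia.
Qed.

Lemma Fcol n (k j : 'I_n) : nnz_col (Fmx n k.+1) j = minn (gg n j) (gg n k).
Proof.
have hj := ltn_ord j; have hk := ltn_ord k.
rewrite /nnz_col.
have -> : [set i | Fmx n k.+1 i j != 0] = [set i : 'I_n |
    maxn (k - j) (j - k) <= i <= minn (2 * n - 2 - k - j) (j + k)]%N.
  apply/setP => i; rewrite !inE FmxE; case: ifP => h.
    rewrite sgn_neq0; apply/esym; move/and4P: h => [? ? ? ?]; apply/andP; split; lia.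
  rewrite eqxx; apply/esym/negbTE; apply: contraFN h => /andP[? ?].
  apply/and4P; split; lia.
rewrite card_int; rewrite /gg; lia.
Qed.

Section Ashm.
Variables (n : nat) (H : hypermx n).
Hypothesis HH : is_ashm H.

Lemma ash1 j k : asm_line (fun i => H k i j).
Proof. by case/and3P: HH => /forallP/(_ j)/forallP/(_ k). Qed.
Lemma ash2 i k : asm_line (fun j => H k i j).
Proof. by case/and3P: HH => _ /forallP/(_ i)/forallP/(_ k). Qed.
Lemma ash3 i j : asm_line (fun k => H k i j).
Proof. by case/and3P: HH => _ _ /forallP/(_ i)/forallP/(_ j). Qed.

Lemma Hrow k i : (nnz_row (H k) i <= minn (gg n i) (gg n k))%N.
Proof.
rewrite leq_min; apply/andP; split.
  exact: (@line_bound n (fun a b => H k a b) (fun a => ash2 a k) (fun b => ash1 b k) i).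
exact: (@line_bound n (fun a b => H a i b) (fun a => ash2 i a) (fun b => ash3 i b) k).
Qed.

Lemma Hcol k j : (nnz_col (H k) j <= minn (gg n j) (gg n k))%N.
Proof.
rewrite leq_min; apply/andP; split.
  exact: (@line_bound n (fun a b => H k b a) (fun a => ash1 a k) (fun b => ash2 b k) j).
exact: (@line_bound n (fun a b => H a b j) (fun a => ash1 j a) (fun b => ash3 b j) k).
Qed.

End Ashm.

Lemma card_sum (T : finType) (P : pred T) : #|[set t | P t]| = (\sum_t (P t : nat))%N.
Proof.
rewrite cardsE -sum1_card big_mkcond /=; apply: eq_bigr => t _.
by rewrite unfold_in; case: (P t).
Qed.

Lemma nnz_sum n (A : 'M[int]_n) : nnz A = (\sum_i nnz_row A i)%N.
Proof.
rewrite /nnz card_sum -(pair_bigA _ (fun i j => (A i j != 0 : nat))) /=.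
apply: eq_bigr => i _.
by rewrite /nnz_row card_sum.
Qed.

Lemma nnz3_sum n (H : hypermx n) : nnz3 H = (\sum_k \sum_i nnz_row (H k) i)%N.
Proof.
rewrite /nnz3 card_sum.
rewrite -(pair_bigA _ (fun (ij : 'I_n * 'I_n) (k : 'I_n) => (H k ij.1 ij.2 != 0 : nat))) /=.
rewrite exchange_big /=. apply: eq_bigr => k _.
rewrite -(pair_bigA _ (fun i j => (H k i j != 0 : nat))) /=.
apply: eq_bigr => i _.
by rewrite /nnz_row card_sum.
Qed.

Lemma S_ord n : (\sum_(k < n) \sum_(i < n) minn (gg n i) (gg n k))%N = S n.
Proof.
rewrite /S big_mkord; apply: eq_bigr => k _; by rewrite big_mkord.
Qed.

Lemma Sdiv n : (n * (n ^ 2 + 2) %/ 3)%N = S n.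
Proof. by rewrite -S_closed mulKn. Qed.

Local Close Scope ring_scope.
Unset Implicit Arguments.

Theorem mainTheorem2 (n : nat) (hn : (1 <= n)%N) :
  [/\ (forall H : hypermx n, is_ashm H -> (nnz3 H <= n * (n ^ 2 + 2) %/ 3)%N),
      is_ashm (diamond n),
      nnz3 (diamond n) = (n * (n ^ 2 + 2) %/ 3)%N
    & forall (k : 'I_n) (A : 'M[int]_n),
        is_asm A ->
        (exists H : hypermx n, is_ashm H /\ H k = A) ->
        (nnz A <= nnz (Fmx n k.+1))%N /\
        (forall i : 'I_n,
            (nnz_row A i <= nnz_row (Fmx n k.+1) i)%N /\
            (nnz_col A i <= nnz_col (Fmx n k.+1) i)%N)].
Proof.
split.
- move=> H HH; rewrite nnz3_sum Sdiv -S_ord.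
  apply: leq_sum => k _; apply: leq_sum => i _; exact: Hrow.
- exact: diamond_ashm.
- rewrite nnz3_sum Sdiv -S_ord; apply: eq_bigr => k _; apply: eq_bigr => i _.
  exact: Frow.
- move=> k A _ [H [HH <-]]; split.
    rewrite !nnz_sum; apply: leq_sum => i _; rewrite Frow; exact: Hrow.
  by move=> i; rewrite Frow Fcol; split; [exact: Hrow | exact: Hcol].
Qed.
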